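(* Let $n=2$ and let $t\mapsto (q(t),p(t))$, $t\ge0$, be a solution of $\dot q_i=\partial H/\partial p_i$, $\dot p_i=-\partial H/\partial q_i$, $H=\frac12\sum_{i,j=1}^2p_ip_je^{-|q_i-q_j|}$, with $q_1(0)>q_2(0)$, normalized so that $H_1:=p_1^2+p_2^2+2p_1p_2e^{-|q_1-q_2|}=1$ (equivalently the corresponding geodesic of $g=(e^{-|q_i-q_j|})^{-1}$ has unit speed). If $|p_1+p_2|>1$, or if $p_1-p_2>0$ at $t=0$, then the trajectory never approaches the singular set $\{q_1=q_2\}$; consequently the corresponding 2-peakon solution $u=p_1e^{-|x-q_1|}+p_2e^{-|x-q_2|}$ of the Camassa-Holm equation has no collision.
   Context: The quantity $p_1+p_2$ is constant along solutions. *)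

(* Defs.v *)
From Stdlib Require Import Reals Lra.
Open Scope R_scope.

Definition sgn (x : R) : R :=
  if Rlt_dec 0 x then 1 else if Rlt_dec x 0 then -1 else 0.

Definition kern (q1 q2 : R) : R := exp (- Rabs (q1 - q2)).

(* H_1 = p1^2 + p2^2 + 2 p1 p2 e^{-|q1-q2|}  (= 2H) *)
Definition H1 (q1 q2 p1 p2 : R) : R :=
  p1 ^ 2 + p2 ^ 2 + 2 * p1 * p2 * kern q1 q2.

Definition right_cont0 (f : R -> R) : Prop :=
  forall eps, 0 < eps -> exists d, 0 < d /\
    forall t, 0 <= t < d -> Rabs (f t - f 0) < eps.

(* Solution for t >= 0 of Hamilton's equations for
   H = 1/2 sum_{i,j} p_i p_j e^{-|q_i-q_j|}, n = 2:
     q1' = dH/dp1 = p1 + p2 E,   q2' = dH/dp2 = p2 + p1 E,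
     p1' = -dH/dq1 = p1 p2 sgn(q1-q2) E,  p2' = -dH/dq2 = - p1 p2 sgn(q1-q2) E,
   with E = e^{-|q1-q2|}; the ODE holds for every t > 0 and the
   functions are right-continuous at t = 0. *)
Definition peakon2_solution (q1 q2 p1 p2 : R -> R) : Prop :=
  (forall t, 0 < t ->
     derivable_pt_lim q1 t (p1 t + p2 t * kern (q1 t) (q2 t)) /\
     derivable_pt_lim q2 t (p2 t + p1 t * kern (q1 t) (q2 t)) /\
     derivable_pt_lim p1 t
       (p1 t * p2 t * sgn (q1 t - q2 t) * kern (q1 t) (q2 t)) /\
     derivable_pt_lim p2 t
       (- (p1 t * p2 t * sgn (q1 t - q2 t) * kern (q1 t) (q2 t)))) /\
  right_cont0 q1 /\ right_cont0 q2 /\ right_cont0 p1 /\ right_cont0 p2.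

(* Main.v *)
Require Import Defs.
From Stdlib Require Import Reals Lra FunctionalExtensionality.
From Coquelicot Require Import Coquelicot.
Open Scope R_scope.

Lemma dl_ext f g x l l' : (forall y, f y = g y) -> l = l' ->
  derivable_pt_lim f x l -> derivable_pt_lim g x l'.
Proof.
  intros Hfg <- H eps He. destruct (H eps He) as [d Hd]. exists d.
  intros h Hh Hhd. rewrite <- !Hfg. now apply Hd.
Qed.

Lemma dl_plus f g x a b : derivable_pt_lim f x a -> derivable_pt_lim g x b ->
  derivable_pt_lim (fun y => f y + g y) x (a + b).
Proof. intros; now apply derivable_pt_lim_plus. Qed.
Lemma dl_minus f g x a b : derivable_pt_lim f x a -> derivable_pt_lim g x b ->
  derivable_pt_lim (fun y => f y - g y) x (a - b).
Proof. intros; now apply derivable_pt_lim_minus. Qed.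
Lemma dl_mult f g x a b : derivable_pt_lim f x a -> derivable_pt_lim g x b ->
  derivable_pt_lim (fun y => f y * g y) x (a * g x + f x * b).
Proof. intros; now apply derivable_pt_lim_mult. Qed.
Lemma dl_const c x : derivable_pt_lim (fun _ => c) x 0.
Proof. apply derivable_pt_lim_const. Qed.
Lemma dl_expc f x a : derivable_pt_lim f x a ->
  derivable_pt_lim (fun y => exp (f y)) x (exp (f x) * a).
Proof. intros H. apply (derivable_pt_lim_comp f exp x a (exp (f x)) H).
  apply derivable_pt_lim_exp. Qed.

Lemma dl_abs f x a : derivable_pt_lim f x a -> (f x = 0 -> a = 0) ->
  derivable_pt_lim (fun y => Rabs (f y)) x (sgn (f x) * a).
Proof.
  intros H H0. unfold sgn.
  destruct (Rlt_dec 0 (f x)) as [Hp|Hp].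
  - assert (Hc : continuity_pt f x) by (apply derivable_continuous_pt; exists a; exact H).
    intros eps He. destruct (H eps He) as [d Hd].
    destruct (Hc (f x) Hp) as [al [Hal Hal2]].
    assert (Hm : 0 < Rmin d al) by (apply Rmin_pos; [apply cond_pos|lra]).
    exists (mkposreal _ Hm). intros h Hh Hhd. simpl in Hhd.
    assert (Hfx : 0 < f (x+h)).
    { assert (Hq := Hal2 (x+h)). simpl in Hq. unfold R_dist, D_x, no_cond in Hq.
      assert (Rabs (f (x+h) - f x) < f x).
      { apply Hq. split. split; [exact I| intro E; apply Hh; lra].
        replace (x+h-x) with h by ring. eapply Rlt_le_trans; [exact Hhd| apply Rmin_r]. }
      apply Rabs_def2 in H1. lra. }
    rewrite (Rabs_right (f (x+h))), (Rabs_right (f x)) by lra. rewrite Rmult_1_l. apply Hd; auto.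
    eapply Rlt_le_trans; [exact Hhd| apply Rmin_l].
  - destruct (Rlt_dec (f x) 0) as [Hn|Hn].
    + assert (Hc : continuity_pt f x) by (apply derivable_continuous_pt; exists a; exact H).
      intros eps He. destruct (H eps He) as [d Hd].
      destruct (Hc (- f x) ltac:(lra)) as [al [Hal Hal2]].
      assert (Hm : 0 < Rmin d al) by (apply Rmin_pos; [apply cond_pos|lra]).
      exists (mkposreal _ Hm). intros h Hh Hhd. simpl in Hhd.
      assert (Hfx : f (x+h) < 0).
      { assert (Hq := Hal2 (x+h)). simpl in Hq. unfold R_dist, D_x, no_cond in Hq.
        assert (Rabs (f (x+h) - f x) < - f x).
        { apply Hq. split. split; [exact I| intro E; apply Hh; lra].
          replace (x+h-x) with h by ring. eapply Rlt_le_trans; [exact Hhd| apply Rmin_r]. }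
        apply Rabs_def2 in H1. lra. }
      rewrite (Rabs_left (f (x+h))), (Rabs_left (f x)) by lra.
      replace ((- f (x + h) - - f x) / h - -1 * a) with (- ((f (x + h) - f x) / h - a)) by (field; auto).
      rewrite Rabs_Ropp. apply Hd; auto.
      eapply Rlt_le_trans; [exact Hhd| apply Rmin_l].
    + assert (Hz : f x = 0) by lra. rewrite (H0 Hz), Rmult_0_r.
      intros eps He. destruct (H eps He) as [d Hd]. exists d. intros h Hh Hhd.
      specialize (Hd h Hh Hhd). rewrite Hz, (H0 Hz), Rminus_0_r in Hd.
      rewrite Hz, Rabs_R0. rewrite Rminus_0_r in *. rewrite Rminus_0_r. unfold Rdiv. rewrite Rabs_mult, Rabs_Rabsolu, <- Rabs_mult. exact Hd.
Qed.
Definition ext (f : R -> R) := fun t => f (Rmax 0 t).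

Lemma cont_ed g t0 : (forall eps, 0 < eps -> exists d, 0 < d /\
   forall x, Rabs (x - t0) < d -> Rabs (g x - g t0) < eps) -> continuity_pt g t0.
Proof.
  intros H eps He. destruct (H eps He) as [d [Hd H2]]. exists d. split; auto.
  intros x [_ Hx]. apply H2. exact Hx.
Qed.

Lemma ext_cont f : right_cont0 f -> (forall t, 0 < t -> exists l, derivable_pt_lim f t l) ->
  continuity (ext f).
Proof.
  intros Hr Hd t0. apply cont_ed. intros eps He. unfold ext.
  destruct (Rlt_le_dec t0 0) as [Hn|Hp].
  - exists (- t0). split; [lra|]. intros x Hx. apply Rabs_def2 in Hx.
    rewrite !Rmax_left by lra. rewrite Rminus_diag, Rabs_R0. lra.
  - destruct (Rle_lt_or_eq_dec 0 t0 Hp) as [Hp'|H0].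
    + destruct (Hd t0 Hp') as [l Hl].
      assert (Hc : continuity_pt f t0) by (apply derivable_continuous_pt; exists l; exact Hl).
      destruct (Hc eps He) as [al [Hal H2]].
      exists (Rmin al t0). split; [apply Rmin_pos; lra|]. intros x Hx.
      assert (Hx1 := Rlt_le_trans _ _ _ Hx (Rmin_l _ _)).
      assert (Hx2 := Rlt_le_trans _ _ _ Hx (Rmin_r _ _)).
      apply Rabs_def2 in Hx2 as Hx3.
      rewrite !Rmax_right by lra.
      destruct (Req_dec x t0) as [->|Hne]. { rewrite Rminus_diag, Rabs_R0; lra. }
      apply H2. split. split; [exact I| auto]. exact Hx1.
    + subst t0. destruct (Hr eps He) as [d [Hd0 H2]]. exists d. split; auto.
      intros x Hx. rewrite (Rmax_left 0 0) by lra. apply H2. split; [apply Rmax_l|].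
      rewrite Rminus_0_r in Hx. apply Rabs_def2 in Hx. unfold Rmax. destruct (Rle_dec 0 x); lra.
Qed.

Lemma ext_deriv f t l : 0 < t -> derivable_pt_lim f t l -> derivable_pt_lim (ext f) t l.
Proof.
  intros Ht H eps He. destruct (H eps He) as [d Hd].
  assert (Hm : 0 < Rmin d t) by (apply Rmin_pos; [apply cond_pos|lra]).
  exists (mkposreal _ Hm). intros h Hh Hhd. simpl in Hhd. unfold ext.
  assert (Hx1 := Rlt_le_trans _ _ _ Hhd (Rmin_l _ _)).
  assert (Hx2 := Rlt_le_trans _ _ _ Hhd (Rmin_r _ _)).
  apply Rabs_def2 in Hx2. rewrite !Rmax_right by lra. now apply Hd.
Qed.

Lemma ext_eq f t : 0 <= t -> ext f t = f t.
Proof. intros; unfold ext; now rewrite Rmax_right. Qed.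

Lemma mono F F' : continuity F -> (forall t, 0 < t -> derivable_pt_lim F t (F' t)) ->
  (forall t, 0 <= t -> 0 <= F' t) -> forall t, 0 <= t -> F 0 <= F t.
Proof.
  intros Hc Hd Hp t Ht. destruct (Rle_lt_or_eq_dec 0 t Ht) as [Ht'|<-]; [|lra].
  destruct (MVT_gen F 0 t F') as [c [Hc1 Hc2]].
  - intros x Hx. rewrite Rmin_left, Rmax_right in Hx by lra. apply is_derive_Reals, Hd; lra.
  - intros x _. apply Hc.
  - rewrite Rmin_left, Rmax_right in Hc1 by lra.
    assert (0 <= F' c * (t - 0)) by (apply Rmult_le_pos; [apply Hp; lra| lra]). lra.
Qed.

Lemma const F : continuity F -> (forall t, 0 < t -> derivable_pt_lim F t 0) ->
  forall t, 0 <= t -> F t = F 0.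
Proof.
  intros Hc Hd t Ht.
  assert (H1 := mono F (fun _ => 0) Hc Hd ltac:(intros; lra) t Ht).
  assert (H2 := mono (fun y => - F y) (fun _ => 0) (continuity_opp F Hc)
     ltac:(intros; replace 0 with (-0) by ring; now apply derivable_pt_lim_opp, Hd)
     ltac:(intros; lra) t Ht).
  simpl in H2. lra.
Qed.

Lemma stays_pos F : continuity F -> 0 < F 0 -> (forall t, 0 <= t -> F t <> 0) ->
  forall t, 0 <= t -> 0 < F t.
Proof.
  intros Hc H0 Hn t Ht. destruct (Rlt_le_dec 0 (F t)) as [|Hle]; auto.
  exfalso. destruct (Req_dec (F t) 0) as [E|E]; [now apply (Hn t)|].
  assert (Ht' : 0 < t). { destruct (Rle_lt_or_eq_dec 0 t Ht) as [|<-]; lra. }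
  destruct (IVT (fun y => - F y) 0 t (continuity_opp F Hc) Ht' ltac:(simpl; lra) ltac:(simpl; lra))
    as [z [Hz1 Hz2]].
  apply (Hn z); [lra|]. simpl in Hz2. lra.
Qed.

Lemma cont_fun_ext f g : (forall y, f y = g y) -> continuity f -> continuity g.
Proof. intros H. assert (f = g) by (apply functional_extensionality; auto). now subst. Qed.

Lemma exp_cont : continuity exp.
Proof. intro x. apply derivable_continuous_pt, derivable_pt_exp. Qed.

Lemma K_bounds x : 0 < exp (- Rabs x) <= 1.
Proof.
  split; [apply exp_pos|]. rewrite <- exp_0.
  destruct (Rle_lt_or_eq_dec 0 (Rabs x) (Rabs_pos x)) as [H|H].
  - left. apply exp_increasing. lra.
  - rewrite <- H. right. f_equal. ring.
Qed.

Lemma K_lt1 x : x <> 0 -> exp (- Rabs x) < 1.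
Proof. intros H. rewrite <- exp_0. apply exp_increasing. assert (0 < Rabs x) by (apply Rabs_pos_lt; auto). lra. Qed.

Lemma core (Q1 Q2 P1 P2 : R -> R) :
  continuity Q1 -> continuity Q2 -> continuity P1 -> continuity P2 ->
  (forall t, 0 < t ->
     derivable_pt_lim Q1 t (P1 t + P2 t * kern (Q1 t) (Q2 t)) /\
     derivable_pt_lim Q2 t (P2 t + P1 t * kern (Q1 t) (Q2 t)) /\
     derivable_pt_lim P1 t
       (P1 t * P2 t * sgn (Q1 t - Q2 t) * kern (Q1 t) (Q2 t)) /\
     derivable_pt_lim P2 t
       (- (P1 t * P2 t * sgn (Q1 t - Q2 t) * kern (Q1 t) (Q2 t)))) ->
  Q1 0 > Q2 0 ->
  H1 (Q1 0) (Q2 0) (P1 0) (P2 0) = 1 ->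
  (Rabs (P1 0 + P2 0) > 1 \/ P1 0 - P2 0 > 0) ->
  exists delta, 0 < delta /\ forall t, 0 <= t -> Q1 t - Q2 t >= delta.
Proof.
  intros cQ1 cQ2 cP1 cP2 Hd Hq0 HH0 Hcase.
  set (X := fun y => Q1 y - Q2 y).
  set (K := fun y => exp (- Rabs (X y))).
  assert (cX : continuity X) by (apply continuity_minus; auto).
  assert (cK : continuity K).
  { apply (continuity_comp (fun y => - Rabs (X y)) exp); [|apply exp_cont].
    apply continuity_opp. apply (continuity_comp X Rabs cX Rcontinuity_abs). }
  assert (dX : forall t, 0 < t -> derivable_pt_lim X t ((P1 t - P2 t) * (1 - K t))).
  { intros t Ht. destruct (Hd t Ht) as [h1 [h2 _]]. eapply dl_ext; [intro; reflexivity| |].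
    2: apply (dl_minus _ _ _ _ _ h1 h2). unfold K, X, kern. ring. }
  assert (dK : forall t, 0 < t -> derivable_pt_lim K t
            (K t * (- (sgn (X t) * ((P1 t - P2 t) * (1 - K t)))))).
  { intros t Ht. unfold K at 1. apply dl_expc.
    apply (derivable_pt_lim_opp (fun y => Rabs (X y))). apply dl_abs; [now apply dX|].
    intros Hx. unfold K. rewrite Hx, Rabs_R0, Ropp_0, exp_0. ring. }
  set (Hf := fun y => P1 y * P1 y + P2 y * P2 y + 2 * P1 y * P2 y * K y).
  assert (cHf : continuity Hf).
  { unfold Hf. apply continuity_plus; [apply continuity_plus|];
      repeat apply continuity_mult; auto; apply continuity_const; intros ??; reflexivity. }
  assert (Hf1 : forall t, 0 <= t -> Hf t = 1).
  { intros t Ht. rewrite (const Hf cHf); [|clear t Ht|auto].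
    - rewrite <- HH0. unfold Hf, H1, K, X, kern. ring.
    - intros t Ht. destruct (Hd t Ht) as [_ [_ [h3 h4]]].
      assert (h5 := dK t Ht).
      eapply dl_ext; [intro; reflexivity| |].
      2: { unfold Hf. apply dl_plus; [apply dl_plus|]; repeat apply dl_mult; eauto using dl_const. }
      unfold K, X, kern in *. ring. }
  set (Sm := fun y => P1 y + P2 y).
  assert (cS : continuity Sm) by (apply continuity_plus; auto).
  assert (S0 : forall t, 0 <= t -> Sm t = Sm 0).
  { apply const; auto. intros t Ht. destruct (Hd t Ht) as [_ [_ [h3 h4]]].
    eapply dl_ext; [intro; reflexivity| |]. 2: apply (dl_plus _ _ _ _ _ h3 h4). ring. }
  set (s := Sm 0).
  assert (Hid : forall t, 0 <= t ->
     s^2 * (1 + K t) + (P1 t - P2 t)^2 * (1 - K t) = 2).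
  { intros t Ht. unfold s; rewrite <- (S0 t Ht). replace 2 with (2 * Hf t) by (rewrite (Hf1 t Ht); ring). unfold Sm, Hf. ring. }
  assert (X0 : 0 < X 0) by (unfold X; lra).
  assert (Kb : forall t, 0 < K t <= 1) by (intro; apply K_bounds).
  assert (Kl : forall t, X t <> 0 -> K t < 1) by (intros; now apply K_lt1).
  destruct (Rlt_le_dec 1 (Rabs s)) as [Hs|Hs].
  -
    assert (Hs2 : 1 < s^2).
    { rewrite <- (pow2_abs s). nra. }
    set (c := (2 - s^2) / s^2).
    assert (Kc : forall t, 0 <= t -> K t <= c).
    { intros t Ht. assert (H := Hid t Ht). destruct (Kb t).
      assert (0 <= (P1 t - P2 t)^2 * (1 - K t)) by (apply Rmult_le_pos; [apply pow2_ge_0|lra]).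
      unfold c. apply (Rmult_le_reg_r (s^2)); [lra|]. unfold Rdiv.
      rewrite Rmult_assoc, Rinv_l, Rmult_1_r by lra. nra. }
    assert (c0 : 0 < c) by (destruct (Kb 0); specialize (Kc 0 (Rle_refl 0)); lra).
    assert (c1 : c < 1).
    { unfold c. apply (Rmult_lt_reg_r (s^2)); [lra|]. unfold Rdiv.
      rewrite Rmult_assoc, Rinv_l, Rmult_1_r by lra. lra. }
    assert (Hd0 : 0 < - ln c) by (assert (ln c < 0) by (rewrite <- ln_1; apply ln_increasing; lra); lra).
    assert (Xa : forall t, 0 <= t -> - ln c <= Rabs (X t)).
    { intros t Ht. assert (ln (K t) <= ln c) by (apply ln_le; [apply Kb| apply Kc; auto]).
      unfold K in H. rewrite ln_exp in H. lra. }
    assert (Xp : forall t, 0 <= t -> 0 < X t).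
    { apply stays_pos; auto. intros t Ht E. specialize (Xa t Ht). rewrite E, Rabs_R0 in Xa. lra. }
    exists (- ln c). split; auto. intros t Ht. specialize (Xa t Ht).
    rewrite Rabs_right in Xa by (specialize (Xp t Ht); lra). unfold X in Xa. lra.
  -
    destruct Hcase as [Hc|Hc].
    { exfalso. unfold s, Sm in Hs. lra. }
    assert (Hs2 : s^2 <= 1).
    { rewrite <- (pow2_abs s). assert (0 <= Rabs s) by apply Rabs_pos. nra. }
    assert (Dp : forall t, 0 <= t -> 0 < P1 t - P2 t).
    { destruct (Rlt_le_dec (s^2) 1) as [Hs3|Hs3].
      + assert (Xn : forall t, 0 <= t -> X t <> 0).
        { intros t Ht E. assert (H := Hid t Ht). unfold K in H. rewrite E, Rabs_R0, Ropp_0, exp_0 in H. lra. }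
        assert (Xp := stays_pos X cX X0 Xn).
        apply (stays_pos (fun y => P1 y - P2 y)); [apply continuity_minus; auto| lra|].
        intros t Ht E. assert (H := Hid t Ht). rewrite E in H. destruct (Kb t).
        assert (0 <= s^2) by apply pow2_ge_0. nra.
      + assert (s2 : s^2 = 1) by lra.
        intros t Ht. cut (P1 t - P2 t = P1 0 - P2 0); [lra|].
        apply (const (fun y => P1 y - P2 y)); [apply continuity_minus; auto| |auto].
        intros u Hu. destruct (Hd u Hu) as [_ [_ [h3 h4]]].
        eapply dl_ext; [intro; reflexivity| |]. 2: apply (dl_minus _ _ _ _ _ h3 h4).
        destruct (Req_dec (X u) 0) as [E|E].
        * unfold X in E. rewrite E. unfold sgn. destruct (Rlt_dec 0 0); [lra|].
          destruct (Rlt_dec 0 0); [lra|]. ring.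
        * assert (Hk := Kl u E). assert (H := Hid u ltac:(lra)). rewrite s2 in H.
          assert (Hd2 : (P1 u - P2 u)^2 = 1).
          { apply (Rmult_eq_reg_r (1 - K u)); [|lra]. lra. }
          assert (Hsu := S0 u ltac:(lra)). fold s in Hsu. unfold Sm in Hsu.
          assert (Hpp : P1 u * P2 u = 0).
          { replace (P1 u * P2 u) with (((P1 u + P2 u)^2 - (P1 u - P2 u)^2)/4) by field.
            rewrite Hsu, s2, Hd2. field. }
          rewrite Hpp. ring. }
    exists (X 0). split; auto. intros t Ht.
    assert (X 0 <= X t).
    { apply (mono X (fun y => (P1 y - P2 y) * (1 - K y))); auto.
      intros u Hu. apply Rmult_le_pos; [left; now apply Dp| destruct (Kb u); lra]. }
    unfold X in *. lra.
Qed.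

Theorem lemma2 (q1 q2 p1 p2 : R -> R) :
  peakon2_solution q1 q2 p1 p2 ->
  q1 0 > q2 0 ->
  H1 (q1 0) (q2 0) (p1 0) (p2 0) = 1 ->
  (Rabs (p1 0 + p2 0) > 1 \/ p1 0 - p2 0 > 0) ->
  (exists delta, 0 < delta /\ forall t, 0 <= t -> q1 t - q2 t >= delta) /\
  (forall t, 0 <= t -> q1 t <> q2 t).
Proof.
  intros [Hd [r1 [r2 [r3 r4]]]] Hq0 HH0 Hcase.
  assert (E0 : forall f, ext f 0 = f 0) by (intro; apply ext_eq; lra).
  assert (Hex : exists delta, 0 < delta /\ forall t, 0 <= t -> ext q1 t - ext q2 t >= delta).
  { apply (core (ext q1) (ext q2) (ext p1) (ext p2)).
    - apply ext_cont; auto. intros t Ht. destruct (Hd t Ht) as [h _]. eexists; exact h.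
    - apply ext_cont; auto. intros t Ht. destruct (Hd t Ht) as [_ [h _]]. eexists; exact h.
    - apply ext_cont; auto. intros t Ht. destruct (Hd t Ht) as [_ [_ [h _]]]. eexists; exact h.
    - apply ext_cont; auto. intros t Ht. destruct (Hd t Ht) as [_ [_ [_ h]]]. eexists; exact h.
    - intros t Ht. rewrite !ext_eq by lra. destruct (Hd t Ht) as [h1 [h2 [h3 h4]]].
      repeat split; apply ext_deriv; auto.
    - rewrite !E0; auto.
    - rewrite !E0; auto.
    - rewrite !E0; auto. }
  destruct Hex as [dl [Hdl Hx]].
  assert (Hx' : forall t, 0 <= t -> q1 t - q2 t >= dl).
  { intros t Ht. specialize (Hx t Ht). rewrite !ext_eq in Hx by lra. exact Hx. }
  split; [exists dl; auto|]. intros t Ht E. specialize (Hx' t Ht). lra.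
Qed.
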